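(* Let $R\ge 2$, $s=R+2$, and let $r$ be any positive integer. Then $\mathrm{Perf}(s,r,R)=\emptyset$, i.e. there is no non-trivial $R$-perfect code in $\mathbb F_q^{s\times r}$ with respect to the NRT metric.
   Context: $q$ is a prime power, $\mathbb F_q^{s\times r}$ the set of $s\times r$ matrices over $\mathbb F_q$ with rows in $\mathbb F_q^{1\times r}$. For a row $y=(y_1,\dots,y_r)$, the NRT weight is $w(y)=\max\{j: y_j\neq 0\}$ if $y\ne0$ and $w(0)=0$; for a matrix, $w(x)=\sum_i w(x_i)$. The NRT metric is $d(x,y)=w(x-y)$; $B(c,R)=\{x: d(x,c)\le R\}$. A code $C$ is $R$-perfect if the balls $B(c,R)$, $c\in C$, are pairwise disjoint and cover $\mathbb F_q^{s\times r}$; non-trivial means $|C|>1$ and $C\ne\mathbb F_q^{s\times r}$. $\mathrm{Perf}(s,r,R)$ is the set of non-trivial $R$-perfect codes in $\mathbb F_q^{s\times r}$. *)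

(* Defs.v *)
From mathcomp Require Import all_boot all_order all_algebra all_field.
Set Implicit Arguments. Unset Strict Implicit. Unset Printing Implicit Defensive.
Import GRing.Theory.
Local Open Scope nat_scope.

Definition nrt_row_weight (F : finFieldType) (s r : nat) (x : 'M[F]_(s, r)) (i : 'I_s) : nat :=
  \max_(j < r | x i j != 0%R) j.+1.

Definition nrt_weight (F : finFieldType) (s r : nat) (x : 'M[F]_(s, r)) : nat :=
  \sum_(i < s) nrt_row_weight x i.

Definition nrt_dist (F : finFieldType) (s r : nat) (x y : 'M[F]_(s, r)) : nat :=
  nrt_weight (x - y)%R.

Definition nrt_ball (F : finFieldType) (s r : nat) (c : 'M[F]_(s, r)) (R : nat)
  : {set 'M[F]_(s, r)} :=
  [set x | (nrt_dist x c <= R)%N].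

Definition perfect_code (F : finFieldType) (s r R : nat) (C : {set 'M[F]_(s, r)}) : Prop :=
  (forall c1 c2, c1 \in C -> c2 \in C -> c1 != c2 ->
     [disjoint nrt_ball c1 R & nrt_ball c2 R]) /\
  (forall x : 'M[F]_(s, r), exists2 c, c \in C & x \in nrt_ball c R).

Definition nontrivial_code (F : finFieldType) (s r : nat) (C : {set 'M[F]_(s, r)}) : Prop :=
  (1 < #|C|)%N /\ C != [set: 'M[F]_(s, r)].

Definition Perf (F : finFieldType) (s r R : nat) (C : {set 'M[F]_(s, r)}) : Prop :=
  nontrivial_code C /\ perfect_code R C.

(* Main.v *)
Require Import Defs.
From mathcomp Require Import all_boot all_order all_algebra all_field.
Set Implicit Arguments. Unset Strict Implicit. Unset Printing Implicit Defensive.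
Import GRing.Theory.

Section Helpers.
Variables (F : finFieldType) (s r : nat).
Implicit Types (x y : 'M[F]_(s, r)).

Lemma rw_ge x i j : x i j != 0%R -> j.+1 <= nrt_row_weight x i.
Proof. move=> H; rewrite /nrt_row_weight; exact: (@leq_bigmax_cond _ (fun j0 => x i j0 != 0%R) (fun j0 : 'I_r => j0.+1) j H). Qed.

Lemma rw_le x i n : (forall j, x i j != 0%R -> j.+1 <= n) -> nrt_row_weight x i <= n.
Proof. move=> H; rewrite /nrt_row_weight; exact/bigmax_leqP. Qed.

Lemma rw_le_wt x i : nrt_row_weight x i <= nrt_weight x.
Proof. by rewrite /nrt_weight (bigD1 i) //= leq_addr. Qed.

Lemma sum_card (S : {set 'I_s}) : \sum_(i < s) ((i \in S) : nat) = #|S|.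
Proof.
rewrite -sum1_card [RHS]big_mkcond /=. apply: eq_bigr => i _; by case: (i \in S).
Qed.

Lemma wt_le_card x (S : {set 'I_s}) :
  (forall i, nrt_row_weight x i <= (i \in S)) -> nrt_weight x <= #|S|.
Proof. move=> H; rewrite -sum_card; exact: leq_sum. Qed.

Lemma wt_ge_card x (S : {set 'I_s}) :
  (forall i, (i \in S) <= nrt_row_weight x i) -> #|S| <= nrt_weight x.
Proof. move=> H; rewrite -sum_card; exact: leq_sum. Qed.

Lemma dist_shift c (A B : 'M[F]_(s, r)) :
  nrt_dist (c + A) (c + B) = nrt_weight (A - B).
Proof. by rewrite /nrt_dist opprD addrACA subrr add0r. Qed.

Lemma dist_shift0 c (A : 'M[F]_(s, r)) : nrt_dist (c + A) c = nrt_weight A.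
Proof. by rewrite /nrt_dist addrAC subrr add0r. Qed.

Lemma dist_shift' c0 (A : 'M[F]_(s, r)) c :
  nrt_dist (c0 + A) c = nrt_weight (A - (c - c0)).
Proof. by rewrite -{1}(subrK c0 c) (addrC (c - c0)%R) dist_shift. Qed.

Lemma mxsubE (A B : 'M[F]_(s, r)) i j : (A - B)%R i j = (A i j - B i j)%R.
Proof. by rewrite !mxE. Qed.

End Helpers.

Theorem mainTheorem13 (F : finFieldType) (R r : nat) :
  (2 <= R)%N -> (0 < r)%N ->
  forall C : {set 'M[F]_(R.+2, r)}, ~ Perf R C.
Proof.
move=> HR hr C [[Hcard _] [Hdisj Hcov]].
have [c0 Hc0] : exists c0, c0 \in C by apply/card_gt0P; exact: ltnW.
pose col0 : 'I_r := Ordinal hr.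
pose M (S : {set 'I_R.+2}) : 'M[F]_(R.+2, r) :=
  (\matrix_(i, j) (if (i \notin S) && (j == col0) then 1%R else 0%R))%R.
have ME : forall S i j, M S i j = if (i \notin S) && (j == col0) then 1%R else 0%R.
  by move=> S i j; rewrite mxE.
have Hclose : forall c1 c2 y, c1 \in C -> c2 \in C ->
    nrt_dist y c1 <= R -> nrt_dist y c2 <= R -> c1 = c2.
  move=> c1 c2 y h1 h2 d1 d2; case: (eqVneq c1 c2) => // ne.
  move: (Hdisj _ _ h1 h2 ne); rewrite disjoint_subset => /subsetP /(_ y).
  by rewrite !inE d1 d2 ; move/(_ isT).
have wtM : forall S, nrt_weight (M S) <= #|~: S|.
  move=> S; apply: wt_le_card => i; apply: rw_le => j; rewrite ME in_setC.
  case: (i \in S) => /=; first by rewrite eqxx.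
  by case: (eqVneq j col0) => [-> _ | ne]; rewrite ?eqxx // (negbTE ne) eqxx.
have wtMge : forall S, #|~: S| <= nrt_weight (M S).
  move=> S; apply: wt_ge_card => i; rewrite in_setC.
  case: (boolP (i \in S)) => //= hi.
  by apply: (@rw_ge _ _ _ _ _ col0); rewrite ME hi eqxx oner_neq0.
have key : forall (j : 'I_R.+2) c, c \in C -> nrt_dist (c0 + M [set j])%R c <= R ->
  [/\ c != c0, (forall k, k != j -> forall col, (c - c0)%R k col = M set0 k col)
    & nrt_weight (M set0 - (c - c0))%R <= R].
  move=> j c hc hd.
  rewrite dist_shift' in hd.
  set D := (c - c0)%R in hd *.
  have ne : c != c0.
    apply/eqP => ec. have D0 : D = 0%R by rewrite /D ec subrr.
    rewrite D0 subr0 in hd. have := wtMge [set j].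
    rewrite cardsC1 card_ord /= => h.
    by have := leq_trans h hd; rewrite ltnn.
  have Dj : forall col, D j col != 0%R -> col.+1 <= R.
    move=> col h; apply: leq_trans hd; apply: leq_trans (rw_le_wt _ j).
    apply: rw_ge; rewrite mxsubE ME in_set1 eqxx /= sub0r oppr_eq0 //.
  have Hrow : forall k, k != j -> forall col, D k col = M set0 k col.
    move=> k hk col; apply/eqP; apply/negPn/negP => hcol.
    have hjk : j != k by rewrite eq_sym.
    have Mjk : forall col', M [set j] k col' = M set0 k col'.
      by move=> col'; rewrite !ME in_set1 in_set0 hk.
    have e : c0 = c.
      apply: (Hclose c0 c (c0 + M [set j; k])%R Hc0 hc).
      - rewrite dist_shift0.
        apply: leq_trans (wtM _) _; rewrite -(leq_add2l #|[set j; k]|) cardsC cards2 hjk card_ord.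
        by rewrite add2n.
      - rewrite dist_shift' -/D.
        apply: leq_trans hd; apply: leq_sum => i _; apply: rw_le => col' h'.
      case: (eqVneq i k) => [ei | hik].
      + subst i. rewrite mxsubE ME in_set2 eqxx orbT /= sub0r oppr_eq0 in h'.
        case: (eqVneq col' col0) => [ec' | hc'].
        * apply: leq_trans (rw_ge (j := col) _); first by rewrite ec'.
          by rewrite mxsubE Mjk subr_eq0 eq_sym.
        * apply: rw_ge; rewrite mxsubE ME in_set1 hk /= (negbTE hc') sub0r oppr_eq0 //.
      + apply: rw_ge; move: h'; rewrite !mxsubE !ME in_set2 in_set1 (negbTE hik) orbF //.
    by rewrite e eqxx in ne.
  split => //.
  rewrite /nrt_weight (bigD1 j) //= big1 ?addn0.
  - apply: rw_le => col h; rewrite mxsubE ME in_set0 /= in h.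
    case: (eqVneq col col0) => [-> | hc']; first exact: ltnW.
    by apply: Dj; move: h; rewrite (negbTE hc') sub0r oppr_eq0.
  - move=> i hi; apply/eqP; rewrite -leqn0; apply: rw_le => col.
    by rewrite mxsubE Hrow // subrr eqxx.
pose i1 : 'I_R.+2 := @Ordinal R.+2 1 isT.
have h01 : (ord0 : 'I_R.+2) != i1 by [].
have [ca hca hxa] := Hcov (c0 + M [set ord0])%R.
have [cb hcb hxb] := Hcov (c0 + M [set i1])%R.
rewrite inE in hxa; rewrite inE in hxb.
have [nea ra wa] := key _ _ hca hxa.
have [neb rb wb] := key _ _ hcb hxb.
case: (eqVneq ca cb) => [eab | nab].
- subst cb.
  have Dall : forall k col, (ca - c0)%R k col = M set0 k col.
    move=> k col; case: (eqVneq k ord0) => [-> | hk]; last exact: ra.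
    by apply: rb; rewrite eq_sym.
  apply: (negP nea); apply/eqP; symmetry.
  apply: (Hclose c0 ca (c0 + M [set ord0; i1])%R) => //.
  + rewrite dist_shift0.
    apply: leq_trans (wtM _) _; rewrite -(leq_add2l #|[set ord0; i1]|) cardsC cards2 h01 card_ord.
    by rewrite add2n.
  + rewrite dist_shift'; apply: leq_trans (wt_le_card (S := [set ord0; i1]) _) _.
    * move=> i; apply: rw_le => col; rewrite mxsubE Dall !ME in_set0 /=.
      case: (i \in [set ord0; i1]) => /=; last by rewrite subrr eqxx.
      by case: (eqVneq col col0) => [-> | hc']; rewrite ?eqxx // subrr eqxx.
    * by rewrite cards2 h01.
- apply: (negP nab); apply/eqP; apply: (Hclose ca cb (c0 + M set0)%R) => //; by rewrite dist_shift'.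
Qed.
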